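(* The number of iterations performed by any instance of FSCO that satisfies condition (F1) (i.e., there exists $\underline \lambda>0$ such that the stepsizes generated by FSCO satisfy $\lambda_k \geq {\underline \lambda}$ for every $k \ge 0$) is bounded by \[ \min\left\{\min\left[ \frac{1}{\chi}\left(1+\frac{1}{\underline{\lambda} \mu}\right), 1+\frac{1}{\underline{\lambda} \nu}\right] \log\left(1+ \frac{\mu d_0^2}{\bar \varepsilon}\right), \frac{d_0^2}{\underline \lambda\,\bar \varepsilon} \right\}, \] where the scalars $\chi$ and $\bar \varepsilon$ are inputs to FSCO, $d_0 := \min \{\|x-\hat x_0\| : x \in X_*\}$, and \[ \mu=\mu(\phi), \quad \nu := \min \left\{ \mu(\phi) \, , \, \inf_k \mu (\hat \Gamma_k) \right\}. \] (By convention, the bound should be understood as being equal to $d_0^2/(\underline{\lambda}\,\bar{\varepsilon})$ when $\mu=0$.)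
   Context: Consider the problem $\phi_*:=\min\{\phi(x): x\in\mathbb{R}^n\}$, where $\phi:\mathbb{R}^n\to(-\infty,+\infty]$ is a proper lower semicontinuous convex function, and let $X_*$ be its (nonempty) set of optimal solutions. For a proper lower semicontinuous convex function $\psi$, the intrinsic convex parameter $\mu(\psi)$ is the largest scalar $\mu$ such that $\psi(\cdot)-\mu\|\cdot\|^2/2$ is convex. A black-box BB$(x^-,\chi,\varepsilon)$, with input $(x^-,\chi,\varepsilon)\in \mathrm{dom}\,\phi\times[0,1)\times\mathbb{R}_{++}$, outputs $(x,y,\Gamma,\lambda)$ with $x,y\in\mathrm{dom}\,\phi$, $\Gamma$ a proper lower semicontinuous convex function on $\mathbb{R}^n$, and $\lambda>0$, satisfying $\Gamma\le\phi$, \[ \phi(y)+\frac{\chi}{2\lambda}\|y-x^-\|^2-\min_{u\in\mathbb{R}^n}\left\{\Gamma(u)+\frac{1}{2\lambda}\|u-x^-\|^2\right\}\le\varepsilon, \qquad x=\mathrm{argmin}_{u\in\mathbb{R}^n}\left\{\Gamma(u)+\frac{1}{2\lambda}\|u-x^-\|^2\right\}. \] The framework FSCO$(\hat x_0,\chi,\bar\varepsilon)$, with $(\hat x_0,\chi,\bar\varepsilon)\in\mathrm{dom}\,\phi\times[0,1)\times\mathbb{R}_{+}$, sets $k=1$ and repeats: compute $(\hat x_k,\hat y_k,\hat\Gamma_k,\lambda_k)=\mathrm{BB}(\hat x_{k-1},\chi,(1-\chi)\bar\varepsilon/2)$; if $\phi(\hat y_k)-\phi_*\le\bar\varepsilon$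 stop, else set $k\leftarrow k+1$ and repeat. Condition (F1): there exists $\underline\lambda>0$ such that $\lambda_k\ge\underline\lambda$ for every $k\ge 0$. *)

(* Defs.v *)
From HB Require Import structures.
From mathcomp Require Import all_boot all_order all_algebra.
From mathcomp Require Import all_classical all_reals.
From mathcomp Require Import ereal exp.
Set Implicit Arguments. Unset Strict Implicit. Unset Printing Implicit Defensive.
Import Order.TTheory GRing.Theory Num.Theory.
Local Open Scope classical_set_scope.
Local Open Scope ring_scope.
Local Open Scope ereal_scope.

Section Defs.
Variables (R : realType) (n : nat).
Notation vec := 'rV[R]_n.

Definition enormsq (v : vec) : R := (\sum_(i < n) (v ord0 i) ^+ 2)%R.
Definition enorm (v : vec) : R := Num.sqrt (enormsq v).

Definition edom (f : vec -> \bar R) : set vec := [set x | f x < +oo].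

Definition proper_fn (f : vec -> \bar R) : Prop :=
  (exists x, f x < +oo) /\ (forall x, -oo < f x).

Definition lsc_fn (f : vec -> \bar R) : Prop :=
  forall (x : vec) (a : R), a%:E < f x ->
    exists2 d : R, (0 < d)%R & forall y, (enorm ((y - x)%R) < d)%R -> a%:E < f y.

Definition convex_fn (f : vec -> \bar R) : Prop :=
  forall (x y : vec) (t : R), (0 <= t <= 1)%R ->
    f ((t *: x + (1 - t) *: y)%R) <= t%:E * f x + (1 - t)%R%:E * f y.

Definition closed_proper_convex (f : vec -> \bar R) : Prop :=
  [/\ proper_fn f, lsc_fn f & convex_fn f].

Definition mu_param (f : vec -> \bar R) : \bar R :=
  ereal_sup [set c%:E | c in
    [set c : R | convex_fn (fun x => f x - (c / 2 * enormsq x)%:E)]].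

Definition opt_val (phi : vec -> \bar R) : \bar R := ereal_inf (range phi).
Definition opt_set (phi : vec -> \bar R) : set vec :=
  [set x | phi x = opt_val phi].

Definition dist0 (phi : vec -> \bar R) (x0 : vec) : R :=
  inf [set enorm ((x - x0)%R) | x in opt_set phi].

Definition BB_spec (phi : vec -> \bar R) (xm : vec) (chi eps : R)
    (x y : vec) (Gam : vec -> \bar R) (lam : R) : Prop :=
  [/\ (edom phi x /\ edom phi y), closed_proper_convex Gam, (0 < lam)%R,
      (forall u, Gam u <= phi u) /\
      (forall u, Gam x + (enormsq ((x - xm)%R) / (2 * lam))%:E
                 <= Gam u + (enormsq ((u - xm)%R) / (2 * lam))%:E) &
      phi y + (chi / (2 * lam) * enormsq ((y - xm)%R))%:E
        - (Gam x + (enormsq ((x - xm)%R) / (2 * lam))%:E) <= eps%:E].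

(* A run of FSCO(xh 0, chi, epsb) performing N iterations (k = 1..N):
   each iteration calls BB on the previous prox center, and the stopping
   test failed at every iteration k < N (so iteration k+1 was performed). *)
Definition FSCO_run (phi : vec -> \bar R) (chi epsb : R) (N : nat)
    (xh yh : nat -> vec) (G : nat -> vec -> \bar R) (lam : nat -> R) : Prop :=
  [/\ edom phi (xh 0%N),
      (forall k, (1 <= k <= N)%N ->
         BB_spec phi (xh k.-1) chi ((1 - chi) * epsb / 2) (xh k) (yh k) (G k) (lam k)) &
      (forall k, (1 <= k < N)%N -> (fine (opt_val phi) + epsb)%:E < phi (yh k))].

Definition nu_param (phi : vec -> \bar R) (G : nat -> vec -> \bar R) (N : nat)
  : \bar R :=
  Order.min (mu_param phi)
    (ereal_inf [set mu_param (G k) | k in [set k : nat | (1 <= k <= N)%N]]).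

End Defs.

(* Main.v *)
Require Import Defs.
From HB Require Import structures.
From mathcomp Require Import all_boot all_order all_algebra.
From mathcomp Require Import all_classical all_reals.
From mathcomp Require Import ereal exp.
From mathcomp Require Import ring lra zify.
Import Order.TTheory GRing.Theory Num.Theory.
Local Open Scope classical_set_scope.
Local Open Scope ring_scope.

Section Aux.
Variables (R : realType) (n : nat).
Notation vec := 'rV[R]_n.

Lemma enormsq_ge0 (v : vec) : 0 <= enormsq v.
Proof. by rewrite /enormsq; apply: sumr_ge0 => i _; rewrite sqr_ge0. Qed.

Lemma enormsq_conv (t : R) (a b : vec) :
  enormsq (t *: a + (1 - t) *: b) =
  t * enormsq a + (1 - t) * enormsq b - t * (1 - t) * enormsq (a - b).
Proof.
rewrite /enormsq !mulr_sumr -big_split -sumrB /=.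
by apply: eq_bigr => i _; rewrite !mxE; ring.
Qed.

Lemma enormsq_wsum (a b : R) (p q : vec) : 0 <= a -> 0 <= b ->
  a * b * enormsq (p + q) <= (a + b) * (a * enormsq q + b * enormsq p).
Proof.
move=> a0 b0; rewrite /enormsq !mulr_sumr -big_split !mulr_sumr /=.
apply: ler_sum => i _; rewrite !mxE.
have: 0 <= (a * q ord0 i - b * p ord0 i) ^+ 2 by rewrite sqr_ge0.
move=> h; nra.
Qed.

Lemma conv_shift (t : R) (u v w : vec) :
  t *: u + (1 - t) *: v - w = t *: (u - w) + (1 - t) *: (v - w).
Proof. by apply/matrixP => i j; rewrite !mxE; ring. Qed.

Definition SC (f : vec -> \bar R) (c : R) := forall (x y : vec) (t : R),
  0 <= t <= 1 -> (f x < +oo)%E -> (f y < +oo)%E ->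
  (f (t *: x + (1 - t) *: y)%R <=
   (t * fine (f x) + (1 - t) * fine (f y) - c / 2 * (t * (1 - t)) * enormsq (x - y))%:E)%E.

Lemma finE {e : \bar R} : (-oo < e)%E -> (e < +oo)%E -> e = (fine e)%:E.
Proof. by case: e. Qed.

Lemma SC_of_convex f c : (forall x, (-oo < f x)%E) ->
  convex_fn (fun x => f x - (c / 2 * enormsq x)%:E)%E -> SC f c.
Proof.
move=> fgt cvx x y t t01 fx fy.
have := cvx x y t t01.
rewrite (finE (fgt x) fx) (finE (fgt y) fy) /=.
rewrite -!EFinB -!EFinM -EFinD EFinN leeBlDr // -EFinD => h.
apply: (le_trans h); rewrite lee_fin enormsq_conv.
set a := fine (f x); set b := fine (f y).
set Nx := enormsq x; set Ny := enormsq y; set Nxy := enormsq (x - y).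
rewrite le_eqVlt; apply/orP; left; apply/eqP; ring.
Qed.

Lemma SC_mono f c c' : c <= c' -> SC f c' -> SC f c.
Proof.
move=> cc' h x y t t01 fx fy; apply: (le_trans (h x y t t01 fx fy)).
rewrite lee_fin lerD2l lerN2.
have := enormsq_ge0 (x - y); case/andP: t01 => t0 t1 hN.
have : 0 <= t * (1 - t) by apply: mulr_ge0; lra.
move=> htt; rewrite -(mulrA (c / 2)) -(mulrA (c' / 2)).
apply: ler_wpM2r; first exact: mulr_ge0.
lra.
Qed.

Lemma SC_lim f nu : (forall c, c < nu -> SC f c) -> SC f nu.
Proof.
move=> h x y t t01 fx fy.
set z := (t *: x + (1 - t) *: y)%R.
set A := t * fine (f x) + (1 - t) * fine (f y).
set K := t * (1 - t) * enormsq (x - y).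
have K0 : 0 <= K.
  case/andP: t01 => t0 t1; apply: mulr_ge0; last exact: enormsq_ge0.
  apply: mulr_ge0; lra.
have -> : nu / 2 * (t * (1 - t)) * enormsq (x - y) = nu / 2 * K by rewrite /K !mulrA.
have hc c : c < nu -> (f z <= (A - c / 2 * K)%:E)%E.
  by move=> hcn; have := h c hcn x y t t01 fx fy; rewrite /K !mulrA.
case E: (f z) => [r| |].
- rewrite lee_fin; apply/ler_addgt0Pr => e e0.
  set w := e / (K + 1).
  have w0 : 0 < w by apply: divr_gt0 => //; lra.
  have hw : w * (K + 1) = e by rewrite /w divfK //; apply: lt0r_neq0; lra.
  have := hc (nu - 2 * w) ltac:(lra); rewrite E lee_fin.
  have -> : (nu - 2 * w) / 2 * K = nu / 2 * K - w * K by field.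
  rewrite -hw mulrDr mulr1 => hr'; lra.
- by have := hc (nu - 1) ltac:(lra); rewrite E.
- by rewrite leNye.
Qed.

Lemma mu_SC f nu : (forall x, -oo < f x)%E -> (nu%:E <= mu_param f)%E -> SC f nu.
Proof.
move=> fgt hmu; apply: SC_lim => c cnu.
have : (c%:E < mu_param f)%E by apply: lt_le_trans hmu; rewrite lte_fin.
case/ereal_sup_gt => _ [c' Hc' <-]; rewrite lte_fin => cc'.
apply: (SC_mono _ _ _ (ltW cc')); exact: SC_of_convex.
Qed.

Lemma three_point (G : vec -> \bar R) c lam (xm x u : vec) :
  0 <= c -> 0 < lam -> SC G c ->
  (forall u, G x + (enormsq (x - xm) / (2 * lam))%:E
     <= G u + (enormsq (u - xm) / (2 * lam))%:E)%E ->
  (-oo < G x)%E -> (G x < +oo)%E -> (-oo < G u)%E -> (G u < +oo)%E ->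
  fine (G x) + enormsq (x - xm) / (2 * lam) + (c + lam^-1) / 2 * enormsq (u - x)
   <= fine (G u) + enormsq (u - xm) / (2 * lam).
Proof.
move=> c0 lam0 hsc hmin gx1 gx2 gu1 gu2.
have hL : (2 * lam)^-1 = lam^-1 / 2 by rewrite invfM mulrC.
have L0 : 0 < lam^-1 by rewrite invr_gt0.
rewrite hL ?mulrA.
set L := lam^-1 in L0 hL *.
set gx := fine (G x); set gu := fine (G u).
set Nx := enormsq (x - xm); set Nu := enormsq (u - xm); set Nux := enormsq (u - x).
have N0 : 0 <= Nux by apply: enormsq_ge0.
set P := (c + L) / 2 * Nux.
have P0 : 0 <= P by apply: mulr_ge0 => //; apply: divr_ge0 => //; lra.
have key t : 0 < t -> t <= 1 -> gx + Nx * L / 2 + (1 - t) * P <= gu + Nu * L / 2.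
{ move=> t0 t1.
  have t01 : 0 <= t <= 1 by apply/andP; split; lra.
  have h1 := hsc u x t t01 gu2 gx2.
  have h2 := hmin (t *: u + (1 - t) *: x)%R.
  rewrite conv_shift enormsq_conv in h2.
  have e : (u - xm) - (x - xm) = u - x by rewrite opprB addrA subrK.
  rewrite e hL in h2.
  have h3 := le_trans h2 (leeD2r _ h1).
  rewrite (finE gx1 gx2) -!EFinD lee_fin in h3.
  have : t * (gx + Nx * L / 2 + (1 - t) * P) <= t * (gu + Nu * L / 2).
    rewrite /P; move: h3; rewrite -/gx -/gu -/Nx -/Nu -/Nux -/L /=; nra.
  by rewrite ler_pM2l. }
apply/ler_addgt0Pr => e e0.
set t := e / (P + e).
have t0 : 0 < t by apply: divr_gt0 => //; lra.
have ht : t * (P + e) = e by rewrite /t divfK //; apply: lt0r_neq0; lra.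
have t1 : t <= 1 by rewrite /t ler_pdivrMr; lra.
have := key t t0 t1.
have : 0 <= t * e by apply: mulr_ge0; lra.
nra.
Qed.

Lemma le_dist0 (phi : vec -> \bar R) (x0 : vec) (K : R) :
  opt_set phi !=set0 ->
  (forall xs, opt_set phi xs -> K <= enormsq (xs - x0)) ->
  K <= dist0 phi x0 ^+ 2.
Proof.
move=> [xs0 hxs0] h.
have [K0|K0] := leP K 0.
  by apply: (le_trans K0); rewrite sqr_ge0.
have hs : Num.sqrt K <= dist0 phi x0.
  apply: lb_le_inf.
    by exists (enorm (xs0 - x0)); exists xs0.
  move=> _ [xs hxs <-]; rewrite /enorm ler_sqrt; first exact: h.
  exact: enormsq_ge0.
rewrite -(sqr_sqrtr (ltW K0)).
rewrite ler_sqr ?nnegrE ?sqrtr_ge0 //.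
apply: le_trans hs; exact: sqrtr_ge0.
Qed.

Lemma recur_lin (D : nat -> R) (a : R) (M : nat) :
  (forall k, (1 <= k <= M)%N -> D k + a <= D k.-1) ->
  D M + M%:R * a <= D 0%N.
Proof.
elim: M => [|M IH] h; first by rewrite mul0r addr0.
have h1 := h M.+1 ltac:(by rewrite leqnn andbT).
have h2 : D M + M%:R * a <= D 0%N.
  apply: IH => k /andP [k1 kM]; apply: h; rewrite k1 /=; exact: leqW.
have -> : (M.+1)%:R = M%:R + 1 :> R by rewrite -addn1 natrD.
rewrite mulrDl mul1r; simpl in h1; lra.
Qed.

Lemma recur_geo (D : nat -> R) (q C : R) (M : nat) : 0 <= q ->
  (forall k, (1 <= k <= M)%N -> q * (D k + C) <= D k.-1 + C) ->
  q ^+ M * (D M + C) <= D 0%N + C.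
Proof.
move=> q0; elim: M => [|M IH] h; first by rewrite expr0 mul1r.
have h1 := h M.+1 ltac:(by rewrite leqnn andbT).
have h2 : q ^+ M * (D M + C) <= D 0%N + C.
  apply: IH => k /andP [k1 kM]; apply: h; rewrite k1 /=; exact: leqW.
apply: le_trans h2; rewrite exprSr -mulrA; apply: ler_wpM2l.
  exact: exprn_ge0.
exact: h1.
Qed.

Lemma final_ln (M : nat) (q Z : R) : 1 < q -> q ^+ M <= Z ->
  M%:R * (1 - q^-1) <= ln Z.
Proof.
move=> q1 hZ.
have q0 : 0 < q by lra.
have Z0 : 0 < Z by apply: lt_le_trans hZ; exact: exprn_gt0.
have h1 : ln (q ^+ M) <= ln Z by rewrite ler_ln ?posrE ?exprn_gt0.
rewrite lnXn // -mulr_natl in h1.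
have h2 : 1 - q^-1 <= ln q.
  have := @le_ln1Dx R (q^-1 - 1).
  rewrite (_ : 1 + (q^-1 - 1) = q^-1); last by ring.
  rewrite lnV ?posrE // => h; have : -1 < q^-1 - 1.
    by rewrite ltrBrDr addrC subrr invr_gt0.
  move=> /h; lra.
apply: le_trans h1; apply: ler_wpM2l => //; exact: ler0n.
Qed.

Lemma real_step1 (lam c eb chi m Py ps Dk Dk1 Yc : R) :
  0 < lam -> 0 <= chi -> chi < 1 -> 0 <= Yc -> 0 < eb ->
  Py + chi / (2 * lam) * Yc - m <= (1 - chi) * eb / 2 ->
  m + (c + lam^-1) / 2 * Dk <= ps + Dk1 / (2 * lam) ->
  ps + eb < Py ->
  (1 + c * lam) * Dk + lam * eb <= Dk1.
Proof.
move=> l0 c0 c1 Y0 e0 Ha Hb Hs.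
have ln0 : lam != 0 by apply: lt0r_neq0.
have hY : 0 <= chi / (2 * lam) * Yc.
  by apply: mulr_ge0 => //; apply: divr_ge0 => //; lra.
have hce : 0 <= chi * eb by apply: mulr_ge0; lra.
have E0 : eb / 2 + (c + lam^-1) / 2 * Dk <= Dk1 / (2 * lam) by lra.
have := ler_wpM2l (ltW (mulr_gt0 (ltr0Sn _ 1) l0)) E0.
rewrite mulrDr.
have -> : 2 * lam * (eb / 2) = lam * eb by field.
have -> : 2 * lam * ((c + lam^-1) / 2 * Dk) = (1 + c * lam) * Dk by field.
have -> : 2 * lam * (Dk1 / (2 * lam)) = Dk1 by field.
lra.
Qed.

Lemma real_step2 (lam lb mu chi eb m Py ps Pw Dx Dc Yx Yc S : R) :
  0 < lb -> lb <= lam -> 0 < mu -> 0 < chi -> chi < 1 -> 0 < eb -> 0 <= Dx ->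
  (chi / (1 - chi)) * (lam * mu * chi) * Dx <=
    (chi / (1 - chi) + lam * mu * chi) * (chi / (1 - chi) * Yx + lam * mu * chi * S) ->
  Py + chi / (2 * lam) * Yc - m <= (1 - chi) * eb / 2 ->
  m + (0 + lam^-1) / 2 * ((1 - chi) * Dx + chi * Yx - (1 - chi) * chi * S)
    <= Pw + ((1 - chi) * Dc + chi * Yc - (1 - chi) * chi * S) / (2 * lam) ->
  Pw <= (1 - chi) * ps + chi * Py - mu / 2 * ((1 - chi) * chi) * S ->
  ps + eb < Py ->
  (1 + lb * mu) / (1 + lb * mu * (1 - chi)) * (Dx + eb / (mu * chi))
    <= Dc + eb / (mu * chi).
Proof.
move=> lb0 lbl mu0 ch0 ch1 e0 Dx0 Hab Ha Hb Hw Hs.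
have l0 : 0 < lam by lra.
have ln0 : lam != 0 by apply: lt0r_neq0.
have tn0 : 1 - chi != 0 by apply: lt0r_neq0; lra.
have mn0 : mu != 0 by apply: lt0r_neq0.
have cn0 : chi != 0 by apply: lt0r_neq0.
have t0 : 0 < 1 - chi by lra.
have Hs' : (1 - chi) * (ps + eb) < (1 - chi) * Py by rewrite ltr_pM2l.
have E0 : (1 - chi) * eb / 2 + (0 + lam^-1) / 2 * ((1 - chi) * Dx + chi * Yx)
   + mu / 2 * ((1 - chi) * chi) * S <= (1 - chi) * Dc / (2 * lam).
  rewrite invfM in Ha Hb *; lra.
have K0 : 0 <= 2 * lam / (1 - chi) by apply: divr_ge0; lra.
have := ler_wpM2l K0 E0.
have -> : 2 * lam / (1 - chi) * ((1 - chi) * eb / 2 + (0 + lam^-1) / 2 * ((1 - chi) * Dx + chi * Yx)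
   + mu / 2 * ((1 - chi) * chi) * S) =
   lam * eb + Dx + chi / (1 - chi) * Yx + lam * mu * chi * S.
  by field; rewrite tn0 ln0.
have -> : 2 * lam / (1 - chi) * ((1 - chi) * Dc / (2 * lam)) = Dc.
  by field; rewrite ?tn0 ?ln0.
move=> E1.
set a := chi / (1 - chi); set b := lam * mu * chi.
set s := lb * mu.
set r := s * chi / (1 + s * (1 - chi)).
have s0 : 0 < s by apply: mulr_gt0.
have d0 : 0 < 1 + s * (1 - chi) by have := mulr_gt0 s0 t0; lra.
have dn0 : 1 + s * (1 - chi) != 0 by apply: lt0r_neq0.
have a0 : 0 < a by apply: divr_gt0.
have b0 : 0 < b by apply: mulr_gt0 => //; apply: mulr_gt0.
have hq : (1 + lb * mu) / (1 + lb * mu * (1 - chi)) = 1 + r.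
  rewrite /r /s; field; apply: lt0r_neq0.
  have := mulr_gt0 (mulr_gt0 lb0 mu0) t0; lra.
rewrite hq.
have hr1 : r * (a + b) <= a * b.
  have e : a * b - r * (a + b) = chi ^+ 2 * (lam * mu - s) / ((1 - chi) * (1 + s * (1 - chi))).
    by rewrite /a /b /r; field; rewrite dn0 tn0.
  have : 0 <= chi ^+ 2 * (lam * mu - s) / ((1 - chi) * (1 + s * (1 - chi))).
    apply: divr_ge0; last by apply: mulr_ge0; lra.
    apply: mulr_ge0; first exact: sqr_ge0.
    rewrite subr_ge0 /s; apply: ler_wpM2r; lra.
  rewrite -e; lra.
have hr2 : r * Dx <= a * Yx + b * S.
  have ab0 : 0 < a + b by lra.
  rewrite -(ler_pM2l ab0) mulrA (mulrC _ r).
  apply: le_trans Hab; apply: ler_wpM2r => //.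
have hr3 : r * (eb / (mu * chi)) <= lam * eb.
  have -> : r * (eb / (mu * chi)) = lb * eb / (1 + s * (1 - chi)).
    by rewrite /r /s; field; rewrite -/s dn0 cn0 mn0.
  rewrite ler_pdivrMr //.
  have : 0 <= lb * eb * (s * (1 - chi)) by apply: mulr_ge0; apply: mulr_ge0; lra.
  have : lb * eb <= lam * eb by apply: ler_wpM2r; lra.
  nra.
set C := eb / (mu * chi).
rewrite mulrDl mul1r mulrDr; move: hr2 hr3; rewrite /a /b /C; lra.
Qed.

Lemma iter_facts (phi : vec -> \bar R) chi eps xm x y Gam lam c :
  (forall u, -oo < phi u)%E -> BB_spec phi xm chi eps x y Gam lam -> 0 <= c -> SC Gam c ->
  [/\ phi y = (fine (phi y))%:E,
      fine (phi y) + chi / (2 * lam) * enormsq (y - xm)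
        - (fine (Gam x) + enormsq (x - xm) / (2 * lam)) <= eps,
      0 < lam &
      forall u, (phi u < +oo)%E ->
        fine (Gam x) + enormsq (x - xm) / (2 * lam) + (c + lam^-1) / 2 * enormsq (u - x)
        <= fine (phi u) + enormsq (u - xm) / (2 * lam)].
Proof.
move=> phigt [[dx dy] [[_ Ggt] _ _] lam0 [Gle Gmin] Hlast] c0 hsc.
have Gx1 := Ggt x.
have Gx2 : (Gam x < +oo)%E by apply: le_lt_trans (Gle x) dx.
have phiy := finE (phigt y) dy.
split => //.
- by move: Hlast; rewrite phiy (finE Gx1 Gx2) /= -!EFinD lee_fin.
- move=> u du.
  have Gu2 : (Gam u < +oo)%E by apply: le_lt_trans (Gle u) du.
  have := @three_point Gam c lam xm x u c0 lam0 hsc Gmin Gx1 Gx2 (Ggt u) Gu2.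
  have : fine (Gam u) <= fine (phi u).
    by move: (Gle u); rewrite (finE (Ggt u) Gu2) (finE (phigt u) du) lee_fin /=.
  move=> h1 h2; apply: le_trans h2 _; rewrite lerD2r; exact: h1.
Qed.

Lemma subBB (a b c : vec) : (a - c) - (b - c) = a - b.
Proof. by rewrite opprB addrA subrK. Qed.

Lemma SC0 (Gam : vec -> \bar R) : (forall u, -oo < Gam u)%E -> convex_fn Gam -> SC Gam 0.
Proof.
move=> Ggt cvx; apply: SC_of_convex => //.
have -> : (fun x => Gam x - (0 / 2 * enormsq x)%:E)%E = Gam.
  by apply: boolp.funext => x; rewrite !mul0r sube0.
exact: cvx.
Qed.

Lemma finish_geo (phi : vec -> \bar R) (x0 : vec) (M : nat) (q C kap Z : R) :
  1 < q -> 0 < C -> opt_set phi !=set0 ->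
  (forall xs, opt_set phi xs -> q ^+ M * C <= enormsq (xs - x0) + C) ->
  1 + dist0 phi x0 ^+ 2 / C <= Z ->
  kap * (1 - q^-1) = 1 -> 0 < kap ->
  M%:R <= kap * ln Z.
Proof.
move=> q1 C0 hne h hZ hk k0.
have K : (q ^+ M - 1) * C <= dist0 phi x0 ^+ 2.
  apply: le_dist0 => // xs /h; rewrite mulrBl mul1r; lra.
have hq : q ^+ M <= Z.
  by apply: le_trans hZ; rewrite -lerBlDl ler_pdivlMr.
have h2 := @final_ln M q Z q1 hq.
have -> : M%:R = kap * (M%:R * (1 - q^-1)) :> R by rewrite mulrCA hk mulr1.
by apply: ler_wpM2l; first exact: ltW.
Qed.
End Aux.

Arguments finE {R e}.
Arguments enormsq_ge0 {R n}.
Arguments conv_shift {R n}.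
Arguments enormsq_conv {R n}.
Arguments subBB {R n}.
Arguments enormsq_wsum {R n}.
Arguments SC {R n}.
Arguments real_step1 {R lam c eb chi m Py ps Dk Dk1 Yc}.
Arguments real_step2 {R lam lb mu chi eb m Py ps Pw Dx Dc Yx Yc S}.
Arguments iter_facts {R n phi chi eps xm x y Gam lam c}.
Arguments SC0 {R n Gam}.
Arguments finish_geo {R n phi x0 M q C kap Z}.
Arguments le_dist0 {R n phi x0 K}.
Arguments mu_SC {R n f nu}.

Theorem theorem3p2 (R : realType) (n : nat) (phi : 'rV[R]_n -> \bar R)
  (chi epsb lamlb : R) (N : nat)
  (xh yh : nat -> 'rV[R]_n) (G : nat -> 'rV[R]_n -> \bar R) (lam : nat -> R) :
  closed_proper_convex phi ->
  opt_set phi !=set0 ->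
  0 <= chi < 1 -> 0 < epsb ->
  FSCO_run phi chi epsb N xh yh G lam ->
  (* condition (F1) *)
  0 < lamlb -> (forall k, (1 <= k <= N)%N -> lamlb <= lam k) ->
  let d0 := dist0 phi (xh 0%N) in
  let nu := fine (nu_param phi G N) in
  (N.-1)%:R <= d0 ^+ 2 / (lamlb * epsb) /\
  (forall mu : R, mu_param phi = mu%:E -> 0 < mu ->
     (0 < chi -> (N.-1)%:R <=
        chi^-1 * (1 + (lamlb * mu)^-1) * ln (1 + mu * d0 ^+ 2 / epsb)) /\
     (0 < nu -> (N.-1)%:R <=
        (1 + (lamlb * nu)^-1) * ln (1 + mu * d0 ^+ 2 / epsb))).
Proof.
move=> cpc hopt /andP [chi0 chi1] heps run hlb0 hlam d0 nu.
case: cpc => [[_ phigt] _ _].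
case: run => dom0 hBB hstop.
set ps := fine (opt_val phi).
have hxs : forall xs, opt_set phi xs -> phi xs = ps%:E /\ (phi xs < +oo)%E.
  move=> xs hx.
  have lt : (phi xs < +oo)%E.
    rewrite hx; apply: (@le_lt_trans _ _ (phi (xh 0%N))); last exact: dom0.
    by apply: ge_ereal_inf; exists (phi (xh 0%N)) => //; exists (xh 0%N).
  by split => //; rewrite (finE (phigt xs) lt) /ps hx.
have hk1 : forall k, (1 <= k <= N.-1)%N -> (1 <= k <= N)%N /\ (1 <= k < N)%N.
  move=> k /andP [a b]; split; apply/andP; split => //; lia.
set M := N.-1.
split.
  have K : forall xs, opt_set phi xs -> M%:R * (lamlb * epsb) <= enormsq (xs - xh 0%N).
    move=> xs hx; have [pxs dxs] := hxs xs hx.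
    set D := fun k => enormsq (xs - xh k).
    have := @recur_lin R D (lamlb * epsb) M.
    have DM := enormsq_ge0 (xs - xh M).
    rewrite /D; move=> h; suff : enormsq (xs - xh M) + M%:R * (lamlb * epsb) <= enormsq (xs - xh 0%N) by lra.
    apply: h => k hk; have [hkN hkN'] := hk1 k hk.
    have BBk := hBB k hkN; case: (BBk) => _ [[_ Ggt] _ Gcvx] _ _ _.
    have [phiy Ha lam0 Hb] := iter_facts phigt BBk (lexx 0) (SC0 Ggt Gcvx).
    have Hs := hstop k hkN'; rewrite phiy lte_fin in Hs.
    have Hb' := Hb xs dxs; rewrite pxs /= in Hb'.
    have := real_step1 lam0 chi0 chi1 (enormsq_ge0 _) heps Ha Hb' Hs.
    rewrite mul0r addr0 mul1r => h1.
    have : lamlb * epsb <= lam k * epsb by apply: ler_wpM2r; [exact: ltW | exact: hlam].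
    lra.
  rewrite ler_pdivlMr; last exact: mulr_gt0.
  exact: le_dist0 hopt K.
move=> mu hmu mu0; split.
- move=> chip.
  have scphi : SC phi mu by apply: mu_SC => //; rewrite hmu.
  set s := lamlb * mu.
  have s0 : 0 < s by apply: mulr_gt0.
  have t0 : 0 < 1 - chi by lra.
  have d1 : 0 < 1 + s * (1 - chi) by have := mulr_gt0 s0 t0; lra.
  have sc0 : 0 < s * chi by apply: mulr_gt0.
  apply: (@finish_geo R n phi (xh 0%N) M ((1 + s) / (1 + s * (1 - chi)))
            (epsb / (mu * chi)) (chi^-1 * (1 + s^-1)) _).
  + rewrite ltr_pdivlMr // mul1r; lra.
  + by apply: divr_gt0 => //; apply: mulr_gt0.
  + exact: hopt.
  + move=> xs hx; have [pxs dxs] := hxs xs hx.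
    set C := epsb / (mu * chi).
    have hC : 0 <= C by apply: divr_ge0; [exact: ltW | apply: mulr_ge0; exact: ltW].
    set D := fun k => enormsq (xs - xh k).
    have q0 : 0 <= (1 + s) / (1 + s * (1 - chi)) by apply: divr_ge0; lra.
    have := @recur_geo R D _ C M q0.
    have DM := enormsq_ge0 (xs - xh M).
    have qM := exprn_ge0 M q0.
    rewrite /D => h.
    apply: le_trans (h _); first by apply: ler_wpM2l => //; lra.
    move=> k hk; have [hkN hkN'] := hk1 k hk.
    have BBk := hBB k hkN; case: (BBk) => [[_ dyk] [[_ Ggt] _ Gcvx] _ _ _].
    have [phiy Ha lam0 Hb] := iter_facts phigt BBk (lexx 0) (SC0 Ggt Gcvx).
    have Hs := hstop k hkN'; rewrite phiy lte_fin in Hs.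
    have t01 : 0 <= 1 - chi <= 1 by apply/andP; split; lra.
    have Hw := scphi xs (yh k) (1 - chi) t01 dxs dyk.
    have dw : (phi ((1 - chi) *: xs + (1 - (1 - chi)) *: yh k)%R < +oo)%E.
      by apply: le_lt_trans Hw _; exact: ltry.
    have Hbw := Hb _ dw.
    rewrite (finE (phigt _) dw) lee_fin pxs /= in Hw.
    rewrite !conv_shift !enormsq_conv !subBB in Hbw.
    have e11 : 1 - (1 - chi) = chi by ring.
    rewrite e11 in Hw Hbw.
    have a0 : 0 <= chi / (1 - chi) by apply: divr_ge0; lra.
    have b0 : 0 <= lam k * mu * chi.
      by apply: mulr_ge0; [apply: mulr_ge0|]; lra.
    have Hab := enormsq_wsum _ _ (xs - yh k) (yh k - xh k) a0 b0.
    rewrite (_ : (xs - yh k) + (yh k - xh k) = xs - xh k) in Hab; last first.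
      by rewrite addrA subrK.
    exact: (real_step2 hlb0 (hlam k hkN) mu0 chip chi1 heps (enormsq_ge0 _) Hab Ha Hbw Hw Hs).
  + have d00 : 0 <= d0 ^+ 2 by exact: sqr_ge0.
    rewrite lerD2l.
    have -> : d0 ^+ 2 / (epsb / (mu * chi)) = chi * (mu * d0 ^+ 2 / epsb).
      by field; rewrite ?lt0r_neq0.
    rewrite -{2}[mu * d0 ^+ 2 / epsb]mul1r; apply: ler_wpM2r; last exact: ltW chi1.
    by apply: divr_ge0; [apply: mulr_ge0; lra | lra].
  + by field; rewrite !lt0r_neq0 //; lra.
  + apply: mulr_gt0; first by rewrite invr_gt0.
    have : 0 < s^-1 by rewrite invr_gt0.
    lra.
- move=> nu0.
  have hnuE : nu_param phi G N = nu%:E.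
    by move: nu0; rewrite /nu; case: (nu_param phi G N) => [r _|/=|/=]; rewrite ?ltxx.
  have := le_refl (nu%:E); rewrite -{2}hnuE /nu_param le_min => /andP [hphi hinf].
  have hG : forall k, (1 <= k <= N)%N -> (nu%:E <= mu_param (G k))%E.
    move=> k hk; apply: le_trans hinf _; apply: ge_ereal_inf.
    by exists (mu_param (G k)) => //; exists k.
  have numu : nu <= mu by move: hphi; rewrite hmu lee_fin.
  set s := lamlb * nu.
  have s0 : 0 < s by apply: mulr_gt0.
  apply: (@finish_geo R n phi (xh 0%N) M (1 + s) (epsb / nu) (1 + s^-1) _).
  + lra.
  + by apply: divr_gt0.
  + exact: hopt.
  + move=> xs hx; have [pxs dxs] := hxs xs hx.
    set C := epsb / nu.
    have hC : 0 <= C by apply: divr_ge0; lra.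
    set D := fun k => enormsq (xs - xh k).
    have q0 : 0 <= 1 + s by lra.
    have := @recur_geo R D _ C M q0.
    have DM := enormsq_ge0 (xs - xh M).
    have qM := exprn_ge0 M q0.
    rewrite /D => h.
    apply: le_trans (h _); first by apply: ler_wpM2l => //; lra.
    move=> k hk; have [hkN hkN'] := hk1 k hk.
    have BBk := hBB k hkN; case: (BBk) => _ [[_ Ggt] _ _] _ _ _.
    have [phiy Ha lam0 Hb] := iter_facts phigt BBk (ltW nu0) (mu_SC Ggt (hG k hkN)).
    have Hs := hstop k hkN'; rewrite phiy lte_fin in Hs.
    have Hb' := Hb xs dxs; rewrite pxs /= in Hb'.
    have := real_step1 lam0 chi0 chi1 (enormsq_ge0 _) heps Ha Hb' Hs.
    set Dk := enormsq (xs - xh k); set Dk1 := enormsq (xs - xh k.-1).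
    move=> h1.
    have Dk0 : 0 <= Dk by apply: enormsq_ge0.
    have h2 : s * Dk <= lam k * nu * Dk.
      apply: ler_wpM2r => //; rewrite /s; apply: ler_wpM2r; [lra | exact: hlam].
    have h3 : lamlb * epsb <= lam k * epsb by apply: ler_wpM2r; [lra | exact: hlam].
    have -> : (1 + s) * (Dk + C) = Dk + C + s * Dk + lamlb * epsb.
      by rewrite /C /s; field; rewrite lt0r_neq0.
    lra.
  + have d00 : 0 <= d0 ^+ 2 by exact: sqr_ge0.
    rewrite lerD2l.
    have -> : d0 ^+ 2 / (epsb / nu) = nu * d0 ^+ 2 / epsb.
      by field; rewrite ?lt0r_neq0.
    apply: ler_wpM2r; first by rewrite invr_ge0; lra.
    by apply: ler_wpM2r.
  + by field; rewrite !lt0r_neq0 //; lra.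
  + have : 0 < s^-1 by rewrite invr_gt0.
    lra.
Qed.
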